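(* Let $D$ be a strong asymmetrical digraph with $D\in\mathcal{LE}_3$. Then $\chi_o(D)\leq 6$.
   Context: All digraphs are finite, without loops or multiple arcs. A digraph is asymmetrical if it has no pair of opposite arcs $(u,v),(v,u)$. For an asymmetrical digraph $D$, an oriented $k$-colouring is a proper colouring $V(D)\to\{1,\ldots,k\}$ (vertices joined by an arc get distinct colours) such that all arcs between any two colour classes have the same direction; the oriented chromatic number $\chi_o(D)$ is the least such $k$, equivalently the least order of a tournament $T$ admitting a homomorphism (arc-preserving vertex map) from $D$ to $T$. Paths and cycles are directed; the length of a path or cycle is its number of arcs. A digraph is strong if for every ordered pair of vertices $x,y$ there is a directed path from $x$ to $y$. For a subdigraph $H$ of a digraph $D$, an ear of $H$ in $D$ is either a directed path in $D$ whose two end vertices lie in $H$ and whose internal vertices do not lie in $H$, or a directed cycle in $D$ having exactly one vertex in $H$. An ear decomposition of a strong digraph $D$ is a sequence $(D_0,D_1,\ldots,D_k)$ of strong subdigraphs of $D$ such that $D_0$ is a directed cycle, $D_{j+1}=D_j\cup P_j$ where $P_j$ is an ear of $D_j$ in $D$ for every $j\in\{0,\ldots,k-1\}$, and $D_k=D$. For an integer $i\geq 1$, $\mathcal{LE}_i$ denotes the family of strong digraphs having an ear decomposition in which every ear has length at least $i$. *)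

(* Defs.v *)
From mathcomp Require Import all_boot.
Set Implicit Arguments. Unset Strict Implicit. Unset Printing Implicit Defensive.

Section Digraphs.
Variable V : finType.
Variable e : rel V.

Definition loopless := irreflexive e.
Definition asymmetrical := forall u v, e u v -> ~~ e v u.
Definition strong := forall x y : V, connect e x y.

Definition oriented_colouring (k : nat) (c : V -> 'I_k) :=
  (forall u v, e u v -> c u != c v) /\
  (forall u v x y, e u v -> e x y -> c u = c y -> c v = c x -> False).

Definition oriented_chromatic_le (k : nat) :=
  exists c : V -> 'I_k, oriented_colouring c.

(* A directed path given by its vertex sequence x0 .. xm (m >= 1),
   distinct vertices; its length is size p - 1. *)
Definition dipath (p : seq V) : bool :=
  if p is x :: s then [&& uniq p, path e x s & 0 < size s] else false.
Definition path_arcs (p : seq V) : seq (V * V) := zip p (behead p).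

(* A directed cycle given by its vertex sequence x0 .. x_{m-1} (m >= 2),
   distinct vertices, arcs x_i -> x_{i+1} and x_{m-1} -> x0; length m. *)
Definition dicycle (p : seq V) : bool :=
  if p is x :: s then [&& uniq p, cycle e p & 0 < size s] else false.
Definition cycle_arcs (p : seq V) : seq (V * V) := zip p (rot 1 p).

Definition subdigraph := ({set V} * {set V * V})%type.

Definition full_digraph : subdigraph := ([set: V], [set a | e a.1 a.2]).

Definition strong_sub (H : subdigraph) : bool :=
  [forall x in H.1, forall y in H.1,
     connect (fun a b => (a, b) \in H.2) x y].

(* An ear of H: (p, true) is a directed cycle p with exactly one vertex in H;
   (p, false) is a directed path p whose two end vertices lie in H and whose
   internal vertices do not lie in H. *)
Definition ear_of (H : subdigraph) (P : seq V * bool) : bool :=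
  if P.2 then dicycle P.1 && (#|[set x in P.1 | x \in H.1]| == 1)
  else match P.1 with
       | x :: s => [&& dipath (x :: s), x \in H.1, last x s \in H.1 &
                      all (fun y => y \notin H.1) (behead (belast x s))]
       | [::] => false
       end.

Definition ear_length (P : seq V * bool) : nat :=
  if P.2 then size P.1 else (size P.1).-1.

Definition ear_arcs (P : seq V * bool) : seq (V * V) :=
  if P.2 then cycle_arcs P.1 else path_arcs P.1.

Definition add_ear (H : subdigraph) (P : seq V * bool) : subdigraph :=
  (H.1 :|: [set x in P.1], H.2 :|: [set a in ear_arcs P]).

(* The remaining part of an ear decomposition starting from D_j = H with
   ears Ps = P_j, ..., P_{k-1}: each P is an ear of the current subdigraph
   of length >= i, each D_{j+1} is strong, and D_k = D. *)
Fixpoint ear_seq_ok (i : nat) (H : subdigraph) (Ps : seq (seq V * bool)) : bool :=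
  match Ps with
  | [::] => H == full_digraph
  | P :: Ps' => [&& ear_of H P, i <= ear_length P, strong_sub (add_ear H P)
                  & ear_seq_ok i (add_ear H P) Ps']
  end.

Definition cycle_subdigraph (c : seq V) : subdigraph :=
  ([set x in c], [set a in cycle_arcs c]).

Definition in_LE (i : nat) : Prop :=
  exists (c : seq V) (Ps : seq (seq V * bool)),
    [&& dicycle c, strong_sub (cycle_subdigraph c) & ear_seq_ok i (cycle_subdigraph c) Ps].

End Digraphs.

(* Main.v *)
Require Import Defs.
From mathcomp Require Import all_boot.
From mathcomp Require Import zify.
Set Implicit Arguments. Unset Strict Implicit. Unset Printing Implicit Defensive.

Definition Ttab : seq (seq bool) :=
  [:: [:: false; false; false; true; false; true];
      [:: true; false; true; false; false; true];
      [:: true; false; false; false; true; false];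
      [:: false; true; true; false; false; false];
      [:: true; true; false; true; false; false];
      [:: false; false; true; true; true; false]].

Definition Tarc (i j : 'I_6) : bool := nth false (nth [::] Ttab i) j.

Definition L6 : seq 'I_6 := [:: @Ordinal 6 0 isT; @Ordinal 6 1 isT; @Ordinal 6 2 isT;
  @Ordinal 6 3 isT; @Ordinal 6 4 isT; @Ordinal 6 5 isT].

Lemma all6P (P : pred 'I_6) : all P L6 -> forall a, P a.
Proof.
move/allP => H a; apply: H.
case: a => [[|[|[|[|[|[|n]]]]]] Hn] //; rewrite !inE; apply/orP;
  do ?[by left; apply/eqP; apply: val_inj | right; try apply/orP].
Qed.

Lemma has6P (P : pred 'I_6) : has P L6 -> exists a, P a.
Proof. by move/hasP => [a _ ha]; exists a. Qed.

Lemma T3b : all (fun a => all (fun b => has (fun x => has (fun y =>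
  [&& Tarc a x, Tarc x y & Tarc y b]) L6) L6) L6) L6.
Proof. by vm_compute. Qed.

Lemma T3 a b : exists x y, [&& Tarc a x, Tarc x y & Tarc y b].
Proof.
have H1 := all6P T3b a; have H2 := all6P H1 b.
have [x H3] := has6P H2; have [y h] := has6P H3.
by exists x, y.
Qed.

Lemma Tout a : exists x, Tarc a x.
Proof.
have [x [y /and3P [h _ _]]] := T3 a a; by exists x.
Qed.

Lemma Tirrb : all (fun a => ~~ Tarc a a) L6.
Proof. by vm_compute. Qed.

Lemma Tirr a : ~~ Tarc a a.
Proof. exact: all6P Tirrb a. Qed.

Lemma Tasymb : all (fun a => all (fun b => Tarc a b ==> ~~ Tarc b a) L6) L6.
Proof. by vm_compute. Qed.

Lemma Tasym a b : Tarc a b -> ~~ Tarc b a.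
Proof. have H1 := all6P Tasymb a; have H2 := all6P H1 b.
exact/implyP. Qed.

Lemma walk_ex (a b : 'I_6) l : 3 <= l ->
  exists w : nat -> 'I_6, [/\ w 0 = a, w l = b & forall j, j < l -> Tarc (w j) (w j.+1)].
Proof.
elim: l a => [|l IH] a //.
rewrite leq_eqVlt => /orP [/eqP <-|].
  have [x [y /and3P [h1 h2 h3]]] := T3 a b.
  exists (fun n => match n with 0 => a | 1 => x | 2 => y | _ => b end).
  by split => // -[|[|[|j]]].
rewrite ltnS => /IH {}IH.
have [a' ha'] := Tout a.
have [w [w0 wl wT]] := IH a'.
exists (fun n => if n is n'.+1 then w n' else a); split => //.
by case => [|j] /=; [rewrite w0 | apply: wT].
Qed.

Section Proof.
Variable V : finType.
Variable e : rel V.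

Definition good (H : subdigraph V) :=
  (forall a, a \in H.2 -> (a.1 \in H.1) && (a.2 \in H.1)) /\
  exists c : V -> 'I_6, forall a, a \in H.2 -> Tarc (c a.1) (c a.2).

Lemma zip_nth (d x : V) s a : a \in zip (x :: s) s ->
  exists i, i < size s /\ a = (nth d (x :: s) i, nth d s i).
Proof.
elim: s x => [|y s IH] x //=.
rewrite in_cons => /orP [/eqP ->|/IH [i [hi ->]]]; first by exists 0.
by exists i.+1.
Qed.

Lemma nth_belast (d y : V) s i : i < size s -> nth d (y :: s) i \in belast y s.
Proof.
elim: s y i => [|z s IH] y i //=.
case: i => [|i] hi /=; first by rewrite in_cons eqxx.
by rewrite in_cons IH ?orbT.
Qed.

Lemma nth_behead_belast (x : V) s i : 0 < i -> i < size s ->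
  nth x (x :: s) i \in behead (belast x s).
Proof.
case: i => [|i] // _; case: s => [|y s] //= hi.
exact: nth_belast.
Qed.

Lemma cyc_arcs (x : V) s a : a \in zip (x :: s) (rot 1 (x :: s)) ->
  exists i, i < size (x :: s) /\
    a = (nth x (x :: s) i, nth x (x :: s) (i.+1 %% size (x :: s))).
Proof.
rewrite rot1_cons => /(nthP (x, x)) [i].
rewrite size_zip size_rcons /= minnn => hi.
rewrite nth_zip ?size_rcons // => <-.
exists i; split => //; congr pair.
rewrite nth_rcons.
case: (ltngtP i (size s)) => h.
- by rewrite modn_small.
- by rewrite ltnS leqNgt h in hi.
- by rewrite h modnn.
Qed.

Lemma shift_mod m k i : 0 < m ->
  ((i.+1 %% m) + (m - k)) %% m = ((i + (m - k)) %% m).+1 %% m.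
Proof.
move=> hm.
by rewrite -(addn1 i) -(addn1 ((i + (m-k)) %% m)) !modnDml addnAC.
Qed.

Lemma good_step H P : good H -> ear_of e H P -> 3 <= ear_length P ->
  good (add_ear H P).
Proof.
case: H => H1 H2; case: P => p [] [/= Hends [c Hc]].
-
  rewrite /ear_of /ear_length /= => /andP [Hcyc /cards1P [h Hh]] Hm.
  have hp : h \in p by move: (set11 h); rewrite -Hh inE => /andP [].
  have hH : h \in H1 by move: (set11 h); rewrite -Hh inE => /andP [].
  have Honly : forall v, v \in p -> v \in H1 -> v = h.
    by move=> v vp vH; apply/set1P; rewrite -Hh inE vp.
  case: p Hcyc Hm hp Honly Hh => [|x s] // /and3P [Hu Hcy _] Hm hp Honly _.
  have hk : index h (x :: s) < size (x :: s) by rewrite index_mem.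
  have [w [w0 wm wT]] := walk_ex (c h) (c h) Hm.
  pose c' := fun v => if v \in H1 then c v else w ((index v (x :: s) + (size (x :: s) - index h (x :: s))) %% size (x :: s)).
  have Hc' : forall i, i < size (x :: s) -> c' (nth x (x :: s) i) = w ((i + (size (x :: s) - index h (x :: s))) %% size (x :: s)).
    move=> i hi; rewrite /c'.
    case: ifP => hin.
      have := Honly _ (mem_nth x hi) hin => eh.
      have ik : i = index h (x :: s) by rewrite -eh index_uniq.
      rewrite eh ik subnKC ?modnn ?w0 //; exact: ltnW.
    by rewrite index_uniq.
  split.
    move=> a; rewrite /add_ear /= !in_setU !in_set => /orP [/Hends /andP [-> ->] //|].
    move/cyc_arcs => [i [hi ->]] /=.
    by rewrite !mem_nth ?orbT // ltn_pmod.
  exists c' => a; rewrite /add_ear /= !in_setU !in_set => /orP [ha|].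
    by move/andP: (Hends a ha) => [h1 h2]; rewrite /c' h1 h2 Hc.
  move/cyc_arcs => [i [hi ->]] /=.
  rewrite !Hc' ?ltn_pmod // shift_mod //.
  have : (i + (size (x :: s) - index h (x :: s))) %% size (x :: s) < size (x :: s) by rewrite ltn_pmod.
  move: ((i + (size (x :: s) - index h (x :: s))) %% size (x :: s)) => j hj.
  case: (ltngtP j.+1 (size (x :: s))) => hj'.
  + by rewrite modn_small // wT.
  + by rewrite ltnNge hj in hj'.
  + by rewrite hj' modnn w0 -wm -hj' wT.
-
  rewrite /ear_of /ear_length /=.
  case: p => [|x s] //= /and4P [/and3P [Hu Hpath _] hx hl Hint] Hm.
  have [w [w0 wm wT]] := walk_ex (c x) (c (last x s)) Hm.
  pose c' := fun v => if v \in H1 then c v else w (index v (x :: s)).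
  have Hc' : forall i, i <= size s -> c' (nth x (x :: s) i) = w i.
    move=> i hi; rewrite /c'.
    case: ifP => hin; last by rewrite index_uniq.
    case: i hi hin => [|i] hi hin; first by rewrite w0.
    rewrite leq_eqVlt in hi; case/orP: hi => [/eqP ei|hi].
      have -> : nth x (x :: s) i.+1 = last x s by rewrite /= -nth_last -ei.
      by rewrite -wm ei.
    by have := allP Hint _ (nth_behead_belast x (ltn0Sn i) hi); rewrite hin.
  split.
    move=> a; rewrite /add_ear /= !in_setU !in_set => /orP [/Hends /andP [-> ->] //|].
    move/(zip_nth x) => [i [hi ->]] /=.
    rewrite (mem_nth x (leqW hi : i < size (x :: s))) orbT /=.
    by rewrite in_cons (mem_nth x hi) !orbT.
  exists c' => a; rewrite /add_ear /= !in_setU !in_set => /orP [ha|].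
    by move/andP: (Hends a ha) => [h1 h2]; rewrite /c' h1 h2 Hc.
  move/(zip_nth x) => [i [hi ->]] /=.
  have -> : nth x s i = nth x (x :: s) i.+1 by [].
  by rewrite !Hc' ?wT // ltnW.
Qed.

Lemma good_seq H Ps : good H -> ear_seq_ok e 3 H Ps -> good (full_digraph e).
Proof.
elim: Ps H => [|P Ps IH] H /=; first by move=> hg /eqP <-.
move=> hg /and4P [h1 h2 _ h4].
exact: IH _ (good_step hg h1 h2) h4.
Qed.

End Proof.

Theorem mainTheorem18 (V : finType) (e : rel V) :
  loopless e -> asymmetrical e -> strong e -> in_LE e 3 ->
  oriented_chromatic_le e 6.
Proof.
move=> _ Hasym _ [c0 [Ps /and3P [Hc0 _ Hseq]]].
case: c0 Hc0 Hseq => [|x s] // Hc0 Hseq.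
have Hinit : cycle_subdigraph (x :: s) = add_ear ([set x], set0) (x :: s, true).
  rewrite /cycle_subdigraph /add_ear /= set0U; congr pair.
  by apply/esym/setUidPr; rewrite sub1set inE mem_head.
have Hg0 : good (cycle_subdigraph (x :: s)).
  rewrite Hinit; apply: (@good_step V e).
  - split; first by move=> a; rewrite inE.
    by exists (fun _ => ord0) => a; rewrite inE.
  - rewrite /ear_of /=; apply/andP; split; first exact: Hc0.
    apply/cards1P; exists x.
    by apply/setP => y; rewrite !inE andbC; case: eqP.
  - rewrite /ear_length /=.
    move: Hc0 => /and3P [_ Hcy]; clear -Hcy Hasym; case: s Hcy => [|y [|z s]] //= /andP [hxy /andP [hyx _]].
    by move: (Hasym _ _ hxy); rewrite hyx.
have [_ [c Hc]] := good_seq Hg0 Hseq.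
exists c; split.
- move=> u v huv; apply/eqP => ec.
  have := Hc (u, v); rewrite inE /= ec => /(_ huv).
  by move/negP: (Tirr (c v)).
- move=> u v a b huv hab e1 e2.
  have h1 := Hc (u, v); rewrite inE /= in h1; have {}h1 := h1 huv.
  have h2 := Hc (a, b); rewrite inE /= in h2; have {}h2 := h2 hab.
  rewrite e1 e2 in h1.
  by move: (Tasym h2); rewrite h1.
Qed.
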